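(* For any set $\Gamma\subseteq\mathcal{L}^-$, if $\Gamma$ is consistent (with respect to $\mathbf{ELCR}^-$), then $\Gamma$ is satisfiable, i.e., there are a $k$-sight model $M=(\mathbf{D},\mathbf{I},\Sigma,\sim)$ and $\sigma\in\Sigma$ with $M,\sigma\models\varphi$ for all $\varphi\in\Gamma$. As a consequence, $\mathsf{ELCR}^-$ is compact: a set of $\mathcal{L}^-$-formulas is satisfiable whenever each of its finite subsets is.
   Context: Fix a natural number $k$ and a vocabulary: $Pred$ (predicate symbols with arities, containing binary $R$), a nonempty finite set $Cons$ of constants, $Var=\{x,y\}$; terms $\mathsf{Term}=Cons\cup Var$. $\mathcal{L}_{\mathsf{B}}$: $\alpha::=P(t_1,\dots,t_m)\mid t_1\equiv t_2\mid\neg\alpha\mid(\alpha\land\alpha)$. $\mathcal{L}^-$: $\varphi::=\alpha\mid K_zt\mid\neg\varphi\mid(\varphi\land\varphi)\mid K_z\alpha$ with $\alpha\in\mathcal{L}_{\mathsf{B}}$, $z\in Var$, $t\in\mathsf{Term}$. $\langle K_z\rangle\beta:=\neg K_z\neg\beta$; $K_z\mathcal{T}:=\bigwedge_{t\in\mathcal{T}}K_zt$; $\alpha[t_1/t_2]$ replaces every occurrence of $t_2$ in $\alpha$ by $t_1$; $\mathsf{D}^0t_1t_2:=t_1\equiv t_2$, $\mathsf{D}^{n+1}t_1t_2:=\mathsf{D}^nt_1t_2\lor\bigvee_{t\in\mathsf{Term}}(\mathsf{D}^nt_1t\land(Rtt_2\lor Rt_2t))$; for $\mathcal{T}\subseteq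 Cons$, $K_zz'=\mathcal{T}:=\bigwedge_{c\in\mathcal{T}}\langle K_z\rangle z'\equiv c\land\bigwedge_{c\in Cons\setminus\mathcal{T}}K_z\neg z'\equiv c$. Models: $M=(\mathbf{D},\mathbf{I},\Sigma,\sim)$ with $\mathbf{D}$ nonempty finite; $\mathbf{I}(P)\subseteq\mathbf{D}^m$ for $m$-ary $P$, $\mathbf{R}:=\mathbf{I}(R)$ serial; $\mathbf{I}(c)\in\mathbf{D}$ for $c\in Cons$, every element of $\mathbf{D}$ named by some constant; $\Sigma\subseteq\mathbf{D}^{Var}$ nonempty (situations); $\sim_x,\sim_y$ equivalence relations on $\Sigma$. $\mathbb{D}^0(s)=\{s\}$, $\mathbb{D}^{m+1}(s)=\mathbb{D}^m(s)\cup\{t:\exists u\in\mathbb{D}^m(s),(u,t)\in\mathbf{R}\text{ or }(t,u)\in\mathbf{R}\}$. $M$ is $k$-sight if $\sigma\sim_z\sigma'$ implies $\sigma(z')=\sigma'(z')$ for every $z'\in Var$ with $\sigma(z')\in\mathbb{D}^k(\sigma(z))$. Semantics: $t^{(\mathbf{I},\sigma)}$ is $\mathbf{I}(t)$ or $\sigma(t)$; $P(t_1,\dots,t_m)$ true iff the tuple of values is in $\mathbf{I}(P)$; $t_1\equiv t_2$ iff equal values; Boolean standard; $K_zt$ true at $\sigma$ iff $t$ has the same value at all $\sigma'\in\Sigma$ with $\sigma'\sim_z\sigma$; $K_z\varphi$ true at $\sigma$ iff $\varphi$ true at all $\sigma'\in\Sigma$ with $\sigma'\sim_z\sigma$. $\mathbf{ELCR}^-$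 has axioms and rules (with $z,z'\in Var$, $t,t_i\in\mathsf{Term}$, $c\in Cons$): (Tau) propositional tautologies; (A1) $t_1\equiv t_1$; (A2) $t_1\equiv t_2\to t_2\equiv t_1$; (A3) $t_1\equiv t_2\land t_2\equiv t_3\to t_1\equiv t_3$; (A4) $t_1\equiv t_2\to(\alpha\leftrightarrow\alpha[t_1/t_2])$ for $\alpha\in\mathcal{L}_{\mathsf{B}}$; (MP) from $\varphi\to\psi$ and $\varphi$ infer $\psi$; (Seriality) $\bigvee_{t\in Cons}Rct$; (At-Some-Where) $\bigvee_{c\in Cons}z\equiv c$; ($k$-sight) $\mathsf{D}^kzt\to K_zt$; (K) $K_z(\alpha\to\beta)\to(K_z\alpha\to K_z\beta)$, $\alpha,\beta\in\mathcal{L}_{\mathsf{B}}$; (T) $K_z\alpha\to\alpha$, $\alpha\in\mathcal{L}_{\mathsf{B}}$; (Knowledge-Ground) $K_zz'=\mathcal{T}\to(K_z\alpha\leftrightarrow\bigwedge_{c\in\mathcal{T}}\alpha[c/z'])$ for $\mathcal{T}\subseteq Cons$, $\{z,z'\}=\{x,y\}$, $\alpha\in\mathcal{L}_{\mathsf{B}}$; (K-Additivity) from $\varphi\to\alpha$ infer $\varphi\to K_z\alpha$, where $\varphi=K_z\alpha_1\land\dots\land K_z\alpha_n\land\langle K_z\rangle\beta_1\land\dots\land\langle K_z\rangle\beta_m$, $1\le m+n$, $\alpha,\alpha_i,\beta_j\in\mathcal{L}_{\mathsf{B}}$; (K-Elimination) from $\varphi\to(K_z\alpha\to\beta)$ infer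 $\varphi\to(\alpha\to\beta)$, where $\varphi=K_{z'}\alpha_1\land\dots\land K_{z'}\alpha_n\land\langle K_{z'}\rangle\beta_1\land\dots\land\langle K_{z'}\rangle\beta_m$, $1\le m+n$, $\alpha,\beta,\alpha_i,\beta_j\in\mathcal{L}_{\mathsf{B}}$, $\{z,z'\}=\{x,y\}$; (De-Re-Knowledge) $t\equiv c\to(K_zt\leftrightarrow K_zt\equiv c)$; (Structure-Knowledge) $(K_z\mathcal{T}\land\alpha)\to K_z\alpha$ for $\alpha\in\mathcal{L}_{\mathsf{B}}$ all of whose terms lie in $\mathcal{T}\subseteq\mathsf{Term}$. $\vdash\varphi$ means $\varphi$ is derivable. A set $\Delta$ is inconsistent if $\vdash\bigwedge\Gamma_0\to\bot$ for some finite $\Gamma_0\subseteq\Delta$, and consistent otherwise. *)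

(* Defs.v *)
From mathcomp Require Import all_boot.
From Stdlib Require List.
Set Implicit Arguments.
Unset Strict Implicit.
Unset Printing Implicit Defensive.

Inductive var := vx | vy.

Definition other (z : var) : var := match z with vx => vy | vy => vx end.

Section ELCR.

(* Vocabulary: Pred = the predicate symbols other than the distinguished
   binary symbol R (which gets its own constructor), with arities;
   Cons = the (finite) set of constants. *)
Context (Pred : Type) (arity : Pred -> nat) (Cons : finType).

Inductive term := TCons (c : Cons) | TVar (v : var).

Definition term_eqb (s t : term) : bool :=
  match s, t with
  | TCons a, TCons b => a == b
  | TVar vx, TVar vx => true
  | TVar vy, TVar vy => true
  | _, _ => false
  end.

Definition all_terms : seq term :=
  [seq TCons c | c <- enum Cons] ++ [:: TVar vx; TVar vy].

Inductive bform :=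
| BP (P : Pred) (ts : (arity P).-tuple term)
| BR (t1 t2 : term)
| BEq (t1 t2 : term)
| BNeg (a : bform)
| BAnd (a b : bform).

Inductive form :=
| FP (P : Pred) (ts : (arity P).-tuple term)
| FR (t1 t2 : term)
| FEq (t1 t2 : term)
| FKt (z : var) (t : term)
| FNeg (p : form)
| FAnd (p q : form)
| FKa (z : var) (a : bform).

Fixpoint emb (a : bform) : form :=
  match a with
  | BP P ts => FP ts
  | BR t1 t2 => FR t1 t2
  | BEq t1 t2 => FEq t1 t2
  | BNeg a => FNeg (emb a)
  | BAnd a b => FAnd (emb a) (emb b)
  end.

Definition bTop : bform := BEq (TVar vx) (TVar vx).
Definition bBot : bform := BNeg bTop.
Definition bOr (a b : bform) : bform := BNeg (BAnd (BNeg a) (BNeg b)).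
Definition bImp (a b : bform) : bform := BNeg (BAnd a (BNeg b)).
Fixpoint bigOrB (l : seq bform) : bform :=
  match l with
  | [::] => bBot
  | [:: a] => a
  | a :: l => bOr a (bigOrB l)
  end.

Definition fTop : form := emb bTop.
Definition fBot : form := emb bBot.
Definition fImp (p q : form) : form := FNeg (FAnd p (FNeg q)).
Definition fIff (p q : form) : form := FAnd (fImp p q) (fImp q p).
Fixpoint bigAnd (l : seq form) : form :=
  match l with
  | [::] => fTop
  | [:: p] => p
  | p :: l => FAnd p (bigAnd l)
  end.
Fixpoint bigOrF (l : seq form) : form :=
  match l with
  | [::] => fBot
  | [:: p] => p
  | p :: l => FNeg (FAnd (FNeg p) (FNeg (bigOrF l)))
  end.

Definition dia (z : var) (b : bform) : form := FNeg (FKa z (BNeg b)).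

Definition KT (z : var) (T : seq term) : form := bigAnd [seq FKt z t | t <- T].

Definition tsubst (t1 t2 s : term) : term := if term_eqb s t2 then t1 else s.
Fixpoint bsubst (t1 t2 : term) (a : bform) : bform :=
  match a with
  | BP P ts => BP (map_tuple (tsubst t1 t2) ts)
  | BR s1 s2 => BR (tsubst t1 t2 s1) (tsubst t1 t2 s2)
  | BEq s1 s2 => BEq (tsubst t1 t2 s1) (tsubst t1 t2 s2)
  | BNeg a => BNeg (bsubst t1 t2 a)
  | BAnd a b => BAnd (bsubst t1 t2 a) (bsubst t1 t2 b)
  end.

Fixpoint bterms (a : bform) : seq term :=
  match a with
  | BP P ts => tval ts
  | BR s1 s2 => [:: s1; s2]
  | BEq s1 s2 => [:: s1; s2]
  | BNeg a => bterms a
  | BAnd a b => bterms a ++ bterms b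
  end.

Fixpoint Dn (n : nat) (t1 t2 : term) : bform :=
  match n with
  | 0 => BEq t1 t2
  | n'.+1 => bOr (Dn n' t1 t2)
      (bigOrB [seq BAnd (Dn n' t1 t) (bOr (BR t t2) (BR t2 t)) | t <- all_terms])
  end.

Definition Kzeq (z z' : var) (T : {set Cons}) : form :=
  bigAnd ([seq dia z (BEq (TVar z') (TCons c)) | c <- enum T] ++
          [seq FKa z (BNeg (BEq (TVar z') (TCons c))) | c <- enum (~: T)]).

Definition kphi (z : var) (as_ bs : seq bform) : form :=
  bigAnd ([seq FKa z a | a <- as_] ++ [seq dia z b | b <- bs]).

(* propositional tautologies: true under every valuation of the
   propositional atoms (atomic L_B formulas, K_z t, K_z alpha) *)
Fixpoint peval (v : form -> bool) (p : form) : bool :=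
  match p with
  | FNeg p => ~~ peval v p
  | FAnd p q => peval v p && peval v q
  | _ => v p
  end.
Definition taut (p : form) : Prop := forall v, peval v p = true.

Inductive prov (k : nat) : form -> Prop :=
| Ax_Tau p : taut p -> prov k p
| Ax_A1 t : prov k (FEq t t)
| Ax_A2 t1 t2 : prov k (fImp (FEq t1 t2) (FEq t2 t1))
| Ax_A3 t1 t2 t3 : prov k (fImp (FAnd (FEq t1 t2) (FEq t2 t3)) (FEq t1 t3))
| Ax_A4 t1 t2 a : prov k (fImp (FEq t1 t2) (fIff (emb a) (emb (bsubst t1 t2 a))))
| R_MP p q : prov k (fImp p q) -> prov k p -> prov k q
| Ax_Seriality (c : Cons) :
    prov k (bigOrF [seq FR (TCons c) (TCons t) | t <- enum Cons])
| Ax_AtSomeWhere z :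
    prov k (bigOrF [seq FEq (TVar z) (TCons c) | c <- enum Cons])
| Ax_ksight z t : prov k (fImp (emb (Dn k (TVar z) t)) (FKt z t))
| Ax_K z a b : prov k (fImp (FKa z (bImp a b)) (fImp (FKa z a) (FKa z b)))
| Ax_T z a : prov k (fImp (FKa z a) (emb a))
| Ax_KGround z (T : {set Cons}) a :
    prov k (fImp (Kzeq z (other z) T)
              (fIff (FKa z a)
                    (bigAnd [seq emb (bsubst (TCons c) (TVar (other z)) a) | c <- enum T])))
| R_KAdd z as_ bs a :
    0 < size as_ + size bs ->
    prov k (fImp (kphi z as_ bs) (emb a)) ->
    prov k (fImp (kphi z as_ bs) (FKa z a))
| R_KElim z as_ bs a b :
    0 < size as_ + size bs ->
    prov k (fImp (kphi (other z) as_ bs) (fImp (FKa z a) (emb b))) ->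
    prov k (fImp (kphi (other z) as_ bs) (fImp (emb a) (emb b)))
| Ax_DeRe z t (c : Cons) :
    prov k (fImp (FEq t (TCons c)) (fIff (FKt z t) (FKa z (BEq t (TCons c)))))
| Ax_StructK z (T : seq term) a :
    (forall t, List.In t (bterms a) -> List.In t T) ->
    prov k (fImp (FAnd (KT z T) (emb a)) (FKa z a)).

Definition inconsistent (k : nat) (G : form -> Prop) : Prop :=
  exists l : seq form, (forall p, List.In p l -> G p) /\ prov k (fImp (bigAnd l) fBot).
Definition consistent (k : nat) (G : form -> Prop) : Prop := ~ inconsistent k G.

(* Models. Sigma ⊆ D^Var is represented as a set of pairs (sigma(x), sigma(y)). *)
Record model := Model {
  dom : finType;
  interp : forall P : Pred, (arity P).-tuple dom -> Prop;
  relR : dom -> dom -> Prop;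
  relR_serial : forall d, exists e, relR d e;
  icons : Cons -> dom;
  icons_onto : forall d, exists c, icons c = d;
  sits : dom * dom -> Prop;
  sits_ne : exists s, sits s;
  sim : var -> dom * dom -> dom * dom -> Prop;
  sim_refl : forall z s, sits s -> sim z s s;
  sim_sym : forall z s s', sits s -> sits s' -> sim z s s' -> sim z s' s;
  sim_trans : forall z s1 s2 s3, sits s1 -> sits s2 -> sits s3 ->
      sim z s1 s2 -> sim z s2 s3 -> sim z s1 s3
}.

Section Sem.
Variable M : model.

Definition sval (s : dom M * dom M) (v : var) : dom M :=
  match v with vx => s.1 | vy => s.2 end.

Definition teval (s : dom M * dom M) (t : term) : dom M :=
  match t with TCons c => @icons M c | TVar v => sval s v end.

Fixpoint bsat (s : dom M * dom M) (a : bform) : Prop :=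
  match a with
  | BP P ts => interp (map_tuple (teval s) ts)
  | BR t1 t2 => @relR M (teval s t1) (teval s t2)
  | BEq t1 t2 => teval s t1 = teval s t2
  | BNeg a => ~ bsat s a
  | BAnd a b => bsat s a /\ bsat s b
  end.

Fixpoint sat (s : dom M * dom M) (p : form) : Prop :=
  match p with
  | FP P ts => interp (map_tuple (teval s) ts)
  | FR t1 t2 => @relR M (teval s t1) (teval s t2)
  | FEq t1 t2 => teval s t1 = teval s t2
  | FKt z t => forall s', @sits M s' -> @sim M z s' s -> teval s' t = teval s t
  | FNeg p => ~ sat s p
  | FAnd p q => sat s p /\ sat s q
  | FKa z a => forall s', @sits M s' -> @sim M z s' s -> bsat s' a
  end.

Fixpoint DD (m : nat) (d : dom M) : dom M -> Prop :=
  match m with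
  | 0 => fun e => e = d
  | m'.+1 => fun e => DD m' d e \/
      exists u, DD m' d u /\ (@relR M u e \/ @relR M e u)
  end.

Definition ksight (k : nat) : Prop :=
  forall z s s', @sits M s -> @sits M s' -> @sim M z s s' ->
  forall z', DD k (sval s z) (sval s z') -> sval s z' = sval s' z'.

End Sem.

Definition satisfiable (k : nat) (G : form -> Prop) : Prop :=
  exists M : model, ksight M k /\
  exists s, @sits M s /\ forall p, G p -> @sat M s p.

End ELCR.

(* Main.v *)
Require Import Defs.
From mathcomp Require Import all_boot.
From Stdlib Require List.
From Stdlib Require Import Classical.
From mathcomp Require Import boolp.
Set Implicit Arguments. Unset Strict Implicit. Unset Printing Implicit Defensive.

Section Gen.
Context (Pred : Type) (arity : Pred -> nat) (Cons : finType).
Local Notation form := (form arity Cons).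
Local Notation bform := (bform arity Cons).
Local Notation term := (term Cons).
Local Notation TOP := (@fTop Pred arity Cons).
Local Notation BOT := (@fBot Pred arity Cons).
Local Notation tv := (@TVar Cons).
Local Notation tc := (@TCons Cons).

Lemma In_cat (T : Type) (x : T) (s1 s2 : seq T) :
  List.In x (s1 ++ s2) <-> List.In x s1 \/ List.In x s2.
Proof. elim: s1 => [|a s IH] /=; first by tauto. rewrite IH; tauto. Qed.

Lemma In_map (T U : Type) (f : T -> U) (y : U) (s : seq T) :
  List.In y (map f s) <-> exists x, List.In x s /\ y = f x.
Proof.
elim: s => [|a s IH] /=; first by split => // -[x []].
rewrite IH; split.
- case=> [<-|[x [H ->]]]; [by exists a; auto | by exists x; auto].
- case=> x [[<-|H] ->]; [by left | by right; exists x].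
Qed.

Lemma In_mem (T : eqType) (x : T) (s : seq T) : List.In x s <-> x \in s.
Proof.
elim: s => [|a s IH] //=; rewrite in_cons IH; split.
- by case=> [->|->]; rewrite ?eqxx ?orbT.
- by case/orP => [/eqP ->|]; auto.
Qed.

Lemma allIn (T : Type) (P : pred T) (s : seq T) :
  all P s <-> forall x, List.In x s -> P x.
Proof.
elim: s => [|a s IH] //=; split.
- by case/andP => Ha Hs x [<-|H] //; move/IH: Hs; apply.
- move=> H; rewrite H /=; last by left.
  by apply/IH => x Hx; apply: H; right.
Qed.

Lemma map_In_ext (T U : Type) (f g : T -> U) (s : seq T) :
  (forall x, List.In x s -> f x = g x) -> map f s = map g s.
Proof. elim: s => [|a s IH] //= H; rewrite H ?IH //; auto. Qed.

Definition imps (ps : seq form) (q : form) := foldr (@fImp _ _ _) q ps.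

Lemma peval_imps v (ps : seq form) (q : form) : peval v (imps ps q) = all (peval v) ps ==> peval v q.
Proof.
elim: ps => [|p ps IH] //=; rewrite IH.
by case: (peval v p); case: (all _ _); case: (peval v q).
Qed.

Lemma PL k (ps : seq form) (q : form) : (forall p, List.In p ps -> prov k p) ->
  (forall v, all (peval v) ps -> peval v q) -> prov k q.
Proof.
move=> Hps Hv.
have : prov k (imps ps q).
  apply: Ax_Tau => v; rewrite peval_imps; apply/implyP; exact: Hv.
elim: ps Hps {Hv} => [|p ps IH] //= Hps H.
apply: IH; first by move=> r Hr; apply: Hps; right.
apply: R_MP H _; apply: Hps; by left.
Qed.

Lemma peval_bigAnd v (l : seq form) : peval v TOP -> peval v (bigAnd l) = all (peval v) l.
Proof.
move=> Ht; elim: l => [|p l IH] //=.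
by case: l IH => [|q l] /= IH; rewrite ?andbT // IH.
Qed.

Lemma prov_fTop k : prov k TOP.
Proof. exact: Ax_A1. Qed.

End Gen.

Section Sem2.
Context (Pred : Type) (arity : Pred -> nat) (Cons : finType).
Local Notation form := (form arity Cons).
Local Notation bform := (bform arity Cons).
Local Notation term := (term Cons).
Local Notation TOP := (@fTop Pred arity Cons).
Local Notation BOT := (@fBot Pred arity Cons).
Local Notation tv := (@TVar Cons).
Local Notation tc := (@TCons Cons).

Fixpoint map_terms (h : term -> term) (a : bform) : bform :=
  match a with
  | BP P ts => BP (map_tuple h ts)
  | BR t1 t2 => BR arity (h t1) (h t2)
  | BEq t1 t2 => BEq arity (h t1) (h t2)
  | BNeg a => BNeg (map_terms h a)
  | BAnd a b => BAnd (map_terms h a) (map_terms h b)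
  end.

Lemma bsubstE t1 t2 (a : bform) : bsubst t1 t2 a = map_terms (tsubst t1 t2) a.
Proof. by elim: a => //= [a -> | a -> b ->]. Qed.

Lemma map_terms_ext_in (f g : term -> term) (a : bform) :
  (forall t, List.In t (bterms a) -> f t = g t) -> map_terms f a = map_terms g a.
Proof.
elim: a => /=.
- move=> P ts H; congr BP; apply: val_inj => /=; exact: map_In_ext.
- by move=> t1 t2 H; rewrite !H //; auto.
- by move=> t1 t2 H; rewrite !H //; auto.
- by move=> a IH H; rewrite IH.
- move=> a IHa b IHb H; rewrite IHa ?IHb // => t Ht; apply: H; apply/In_cat; auto.
Qed.

Lemma map_terms_ext (f g : term -> term) (a : bform) :
  (forall t, f t = g t) -> map_terms f a = map_terms g a.
Proof. by move=> H; apply: map_terms_ext_in => t _. Qed.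

Lemma map_terms_comp (f g : term -> term) (a : bform) :
  map_terms f (map_terms g a) = map_terms (fun t => f (g t)) a.
Proof.
elim: a => //= [P ts|a ->|a -> b ->] //.
by congr BP; apply: val_inj => /=; rewrite -map_comp.
Qed.

Lemma bterms_map (f : term -> term) (a : bform) t :
  List.In t (bterms (map_terms f a)) -> exists u, List.In u (bterms a) /\ t = f u.
Proof.
elim: a => /=.
- by move=> P ts /In_map.
- by move=> t1 t2 [<-|[<-|[]]]; [exists t1|exists t2]; auto.
- by move=> t1 t2 [<-|[<-|[]]]; [exists t1|exists t2]; auto.
- by [].
- move=> a IHa b IHb /In_cat [/IHa|/IHb] [u [Hu ->]]; exists u; rewrite In_cat; auto.
Qed.

Lemma map_terms_id (a : bform) : map_terms id a = a.
Proof. by elim: a => //= [P ts|a ->|a -> b ->]; first by congr BP; apply: val_inj; rewrite /= map_id. Qed.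

Section M.
Variable M : model arity Cons.
Local Notation D := (dom M).
Local Notation st := (D * D)%type.

Lemma bsat_map (h : term -> term) (s s' : st) (a : bform) :
  (forall t, List.In t (bterms a) -> teval s (h t) = teval s' t) ->
  (bsat s (map_terms h a) <-> bsat s' a).
Proof.
elim: a => /=.
- move=> P ts H; suff -> : map_tuple (teval s) (map_tuple h ts) = map_tuple (teval s') ts by [].
  apply: val_inj => /=; rewrite -map_comp; exact: map_In_ext.
- by move=> t1 t2 H; rewrite !H //; auto.
- by move=> t1 t2 H; rewrite !H //; auto.
- by move=> a IH H; rewrite IH.
- move=> a IHa b IHb H; rewrite IHa ?IHb // => t Ht; apply: H; apply/In_cat; auto.
Qed.

Lemma bsat_agree (s s' : st) (a : bform) :
  (forall t, List.In t (bterms a) -> teval s t = teval s' t) ->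
  (bsat s a <-> bsat s' a).
Proof.
move=> H; rewrite -{1}(map_terms_id a); exact: bsat_map.
Qed.

Lemma sat_emb (s : st) (a : bform) : sat s (emb a) <-> bsat s a.
Proof. elim: a => //= [a IH|a IHa b IHb]; [by rewrite IH | by rewrite IHa IHb]. Qed.

Lemma sat_TOP (s : st) : sat s TOP.
Proof. by []. Qed.

Lemma sat_BOT (s : st) : ~ sat s BOT.
Proof. by move=> /=; apply. Qed.

Lemma sat_bigAnd (s : st) (l : seq form) :
  sat s (bigAnd l) <-> forall p, List.In p l -> sat s p.
Proof.
elim: l => [|p l IH] /=; first by split => // _ q [].
case: l IH => [|q l] IH; first by split; [move=> H r [<-|[]] | apply; left].
rewrite /= in IH *; rewrite IH; split.
- by case=> Hp Hl r [<-|Hr] //; apply: Hl.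
- by move=> H; split; [apply: H; left | move=> r Hr; apply: H; right].
Qed.

Lemma sat_bigOrF (s : st) (l : seq form) :
  sat s (bigOrF l) <-> exists p, List.In p l /\ sat s p.
Proof.
elim: l => [|p l IH] /=; first by split => [H|[p [[]]]]; exfalso; apply: H.
case: l IH => [|q l] IH; first by split; [exists p; auto | case=> r [[<-|[]]]].
rewrite /= in IH *; rewrite IH; split.
- move=> H; apply: NNPP => Hn; apply: H; split.
  + by move=> Hp; apply: Hn; exists p; auto.
  + by move=> [r [Hr Hs]]; apply: Hn; exists r; auto.
- by case=> r [[<-|Hr] Hs] [H1 H2]; [apply: H1 | apply: H2; exists r].
Qed.

Lemma bsat_bigOrB (s : st) (l : seq bform) :
  bsat s (bigOrB l) <-> exists a, List.In a l /\ bsat s a.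
Proof.
elim: l => [|p l IH] /=; first by split => [H|[p [[]]]]; exfalso; apply: H.
case: l IH => [|q l] IH; first by split; [exists p; auto | case=> r [[<-|[]]]].
rewrite /= in IH *; rewrite IH; split.
- move=> H; apply: NNPP => Hn; apply: H; split.
  + by move=> Hp; apply: Hn; exists p; auto.
  + by move=> [r [Hr Hs]]; apply: Hn; exists r; auto.
- by case=> r [[<-|Hr] Hs] [H1 H2]; [apply: H1 | apply: H2; exists r].
Qed.

Lemma sat_imp (s : st) p q : sat s (fImp p q) <-> (sat s p -> sat s q).
Proof. by rewrite /=; split => [H Hp|H [Hp Hq]]; [apply: NNPP => Hq; apply: H | apply/Hq/H]. Qed.

Lemma sat_iff (s : st) p q : sat s (fIff p q) <-> (sat s p <-> sat s q).
Proof.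
have E : sat s (fIff p q) <-> sat s (fImp p q) /\ sat s (fImp q p) by [].
by rewrite E !sat_imp; tauto. Qed.

Lemma sat_peval (s : st) p : sat s p <-> peval (fun q => `[< sat s q >]) p.
Proof.
elim: p => /=; try by move=> *; split => /asboolP.
- by move=> p IH; rewrite IH; split => [/negP|/negP].
- by move=> p IHp q IHq; rewrite IHp IHq; split => [[-> ->]|/andP].
Qed.

Lemma In_all_terms c : List.In (tc c) (all_terms Cons).
Proof. by apply/In_cat; left; apply/In_map; exists c; split => //; apply/In_mem; rewrite mem_enum. Qed.

Lemma bsat_Dn (s : st) m t1 t2 :
  bsat s (Dn arity m t1 t2) <-> DD m (teval s t1) (teval s t2).
Proof.
elim: m t2 => [|m IH] t2; first by rewrite /=; split => ->.
have E0 : bsat s (Dn arity m.+1 t1 t2) <-> ~ (~ bsat s (Dn arity m t1 t2) /\ ~ bsat s (bigOrB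
  [seq BAnd (Dn arity m t1 t) (bOr (BR arity t t2) (BR arity t2 t)) | t <- all_terms Cons])) by [].
rewrite E0 bsat_bigOrB IH.
have E : (exists a, List.In a [seq BAnd (Dn arity m t1 t) (bOr (BR arity t t2) (BR arity t2 t)) | t <- all_terms Cons]
   /\ bsat s a) <-> exists u, DD m (teval s t1) u /\ (relR u (teval s t2) \/ relR (teval s t2) u).
  split.
  - case=> a [/In_map [t [Ht ->]]] /= [H1 H2]; exists (teval s t); split; first by apply/IH.
    by apply: NNPP => Hn; apply: H2; split => H; apply: Hn; auto.
  - case=> u [H1 H2]; have [c Hc] := icons_onto u.
    exists (BAnd (Dn arity m t1 (tc c)) (bOr (BR arity (tc c) t2) (BR arity t2 (tc c)))); split.
      by apply/In_map; exists (tc c); split => //; apply: In_all_terms.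
    by rewrite /= IH /= Hc; split => // -[]; tauto.
rewrite E /=; split.
- by move=> H; apply: NNPP => Hn; apply: H; split => H'; apply: Hn; [left|right].
- by case=> H [H1 H2]; auto.
Qed.

Lemma DD_refl m d : DD (M := M) m d d.
Proof. by elim: m => [|m IH] /=; auto. Qed.

End M.
End Sem2.

Section Sound.
Context (Pred : Type) (arity : Pred -> nat) (Cons : finType).
Local Notation form := (form arity Cons).
Local Notation bform := (bform arity Cons).
Local Notation term := (term Cons).
Local Notation TOP := (@fTop Pred arity Cons).
Local Notation BOT := (@fBot Pred arity Cons).
Local Notation tv := (@TVar Cons).
Local Notation tc := (@TCons Cons).

Lemma term_eqbP (s t : term) : term_eqb s t -> s = t.
Proof. by case: s => [a|[]]; case: t => [b|[]] //= /eqP ->. Qed.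

Lemma term_eqb_refl (s : term) : term_eqb s s.
Proof. by case: s => [a|[]] //=. Qed.

Lemma other_neq z : other z <> z.
Proof. by case: z. Qed.

Definition upd (D : Type) (s : D * D) (v : var) (d : D) : D * D :=
  match v with vx => (d, s.2) | vy => (s.1, d) end.

Section M.
Variable M : model arity Cons.
Local Notation D := (dom M).
Local Notation st := (D * D)%type.


Lemma upd_eq (s u : st) z : Defs.sval u z = Defs.sval s z -> u = upd s (other z) (Defs.sval u (other z)).
Proof. by case: z; case: u => u1 u2; case: s => s1 s2 /= ->. Qed.

Lemma bsat_subst_var (s : st) c v (a : bform) :
  bsat s (bsubst (tc c) (tv v) a) <-> bsat (upd s v (icons M c)) a.
Proof.
rewrite bsubstE; apply: bsat_map => t _.
case: t => [c'|w] /=; first by case: v.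
by case: v; case: w.
Qed.

Lemma sat_kphi (s : st) z as_ bs :
  sat s (kphi z as_ bs) <->
  (forall a, List.In a as_ -> sat s (FKa z a)) /\ (forall b, List.In b bs -> sat s (dia z b)).
Proof.
rewrite /kphi sat_bigAnd; split.
- move=> H; split => x Hx; apply: H; apply/In_cat; [left|right]; apply/In_map; by exists x.
- case=> H1 H2 p /In_cat [] /In_map [x [Hx ->]]; [exact: H1 | exact: H2].
Qed.

Lemma kphi_shift (s s' : st) z as_ bs : sits s -> sits s' -> sim z s' s ->
  sat s (kphi z as_ bs) -> sat s' (kphi z as_ bs).
Proof.
move=> Hs Hs' Hss; rewrite !sat_kphi => -[H1 H2]; split.
- move=> a Ha u Hu Hus; apply: (H1 a Ha u Hu); exact: (sim_trans Hu Hs' Hs Hus Hss).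
- move=> b Hb Hn; apply: (H2 b Hb) => u Hu Hus; apply: Hn => //.
  apply: (sim_trans Hu Hs Hs' Hus); exact: sim_sym.
Qed.

Lemma sat_Kzeq (s : st) z z' (T : {set Cons}) :
  sat s (Kzeq arity z z' T) <->
  (forall c, c \in T -> sat s (dia z (BEq arity (tv z') (tc c)))) /\
  (forall c, c \notin T -> sat s (FKa z (BNeg (BEq arity (tv z') (tc c))))).
Proof.
rewrite /Kzeq sat_bigAnd; split.
- move=> H; split => c Hc; apply: H; apply/In_cat; [left|right]; apply/In_map; exists c;
    split => //; apply/In_mem; by rewrite mem_enum ?in_setC.
- case=> H1 H2 p /In_cat [] /In_map [c [/In_mem Hc ->]].
  + by apply: H1; rewrite mem_enum in Hc.
  + by apply: H2; rewrite mem_enum in_setC in Hc.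
Qed.

End M.

Definition valid k (p : form) := forall M : model arity Cons, ksight M k ->
  forall s : dom M * dom M, sits s -> sat s p.

(* the surgery model for K-Elimination *)
Section Cut.
Variables (M : model arity Cons) (z : var) (s0 : dom M * dom M).
Definition csim (w : var) (u v : dom M * dom M) :=
  sim w u v /\ (w = z -> (u = s0 <-> v = s0)).
Lemma csim_refl w s : sits s -> csim w s s.
Proof. by move=> Hs; split; [exact: sim_refl | tauto]. Qed.
Lemma csim_sym w s s' : sits s -> sits s' -> csim w s s' -> csim w s' s.
Proof. by move=> Hs Hs' [H1 H2]; split; [exact: sim_sym | move=> /H2; tauto]. Qed.
Lemma csim_trans w s1 s2 s3 : sits s1 -> sits s2 -> sits s3 ->
  csim w s1 s2 -> csim w s2 s3 -> csim w s1 s3.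
Proof.
move=> H1 H2 H3 [A1 B1] [A2 B2]; split; first exact: (sim_trans H1 H2 H3).
by move=> Hw; move: (B1 Hw) (B2 Hw); tauto.
Qed.
Definition cutM : model arity Cons :=
  @Model Pred arity Cons (dom M) (@interp _ _ _ M) (@relR _ _ _ M) (@relR_serial _ _ _ M)
    (@icons _ _ _ M) (@icons_onto _ _ _ M) (@sits _ _ _ M) (@sits_ne _ _ _ M)
    csim csim_refl csim_sym csim_trans.

Lemma bsat_cut (s : dom M * dom M) a : bsat (M := cutM) s a <-> bsat (M := M) s a.
Proof. by []. Qed.

Lemma ksight_cut k : ksight M k -> ksight cutM k.
Proof. by move=> H w s s' Hs Hs' [Hw _]; apply: H. Qed.

Lemma kphi_cut (s : dom M * dom M) as_ bs :
  sat (M := cutM) s (kphi (other z) as_ bs) <-> sat (M := M) s (kphi (other z) as_ bs).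
Proof.
have E : forall u, csim (other z) u s <-> sim (other z) u s.
  by move=> u; split => [[]|H] //; split => // /other_neq.
rewrite !sat_kphi /=; split; case=> H1 H2; split.
- by move=> a Ha u Hu Hus; apply: (H1 a Ha u Hu); apply/E.
- by move=> b Hb Hn; apply: (H2 b Hb) => u Hu /E; apply: Hn.
- by move=> a Ha u Hu /E; apply: (H1 a Ha u Hu).
- by move=> b Hb Hn; apply: (H2 b Hb) => u Hu /E; apply: Hn.
Qed.
End Cut.

Lemma sound k p : prov k p -> valid k p.
Proof.
elim=> {p}.
- by move=> p Ht M _ s _; apply/sat_peval; apply: Ht.
- by move=> t M _ s _.
- by move=> t1 t2 M _ s _; apply/sat_imp => /= ->.
- by move=> t1 t2 t3 M _ s _; apply/sat_imp => /= -[-> ->].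
- move=> t1 t2 a M _ s _; apply/sat_imp => H; rewrite sat_iff !sat_emb bsubstE.
  symmetry; apply: bsat_map => t _; rewrite /tsubst; case: ifP => // /term_eqbP ->; by [].
- by move=> p q _ IH1 _ IH2 M HM s Hs; move: (IH1 M HM s Hs); rewrite sat_imp; apply; apply: IH2.
- move=> c M _ s _; apply/sat_bigOrF.
  have [e He] := relR_serial (icons M c); have [t Ht] := icons_onto e.
  exists (FR arity (tc c) (tc t)); split => /=; last by rewrite Ht.
  by apply/In_map; exists t; split => //; apply/In_mem; rewrite mem_enum.
- move=> z M _ s _; apply/sat_bigOrF.
  have [c Hc] := icons_onto (Defs.sval s z).
  exists (FEq arity (tv z) (tc c)); split => //=.
  by apply/In_map; exists c; split => //; apply/In_mem; rewrite mem_enum.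
- move=> z t M HM s Hs; apply/sat_imp; rewrite sat_emb bsat_Dn => H u Hu Hus.
  case: t H => [c|z'] //= H; symmetry; apply: (HM z s u Hs Hu) => //; exact: sim_sym.
- move=> z a b M _ s _; apply/sat_imp => H1; apply/sat_imp => H2 u Hu Hus.
  by apply: NNPP => Hb; apply: (H1 u Hu Hus); split => //; apply: H2.
- by move=> z a M _ s Hs; apply/sat_imp => H; apply/sat_emb; apply: H => //; apply: sim_refl.
- move=> z T a M HM s Hs; apply/sat_imp; rewrite sat_Kzeq => -[H1 H2].
  rewrite sat_iff sat_bigAnd.
  have Hz : forall u, sits u -> sim z u s -> Defs.sval u z = Defs.sval s z.
    move=> u Hu Hus; symmetry; apply: (HM z s u Hs Hu); first exact: sim_sym.
    exact: DD_refl.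
  split.
  + move=> HK p /In_map [c [/In_mem Hc ->]]; rewrite mem_enum in Hc.
    apply/sat_emb/bsat_subst_var; move: (H1 c Hc) => /= Hd.
    apply: NNPP => Hn; apply: Hd => u Hu Hus Heq; apply: Hn.
    have Heq' : Defs.sval u (other z) = icons M c := Heq.
    by rewrite -Heq' -(upd_eq (Hz u Hu Hus)); exact: HK.
  + move=> HA u Hu Hus; have [c Hc] := icons_onto (Defs.sval u (other z)).
    case: (boolP (c \in T)) => HcT.
    * have := HA (emb (bsubst (tc c) (tv (other z)) a)).
      rewrite sat_emb bsat_subst_var Hc -(upd_eq (Hz u Hu Hus)); apply.
      by apply/In_map; exists c; split => //; apply/In_mem; rewrite mem_enum.
    * by exfalso; apply: (H2 c HcT u Hu Hus) => /=.
- move=> z as_ bs a _ _ IH M HM s Hs; apply/sat_imp => Hk u Hu Hus.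
  have := IH M HM u Hu; rewrite sat_imp sat_emb; apply.
  exact: (kphi_shift Hs Hu Hus).
- move=> z as_ bs a b _ _ IH M HM s Hs; apply/sat_imp => Hk; apply/sat_imp; rewrite !sat_emb => Ha.
  have := IH (@cutM M z s) (@ksight_cut M z s k HM) s Hs.
  rewrite sat_imp kphi_cut sat_imp sat_emb; apply => //.
  by move=> u Hu [_ /(_ erefl) Hu']; have -> : u = s by apply/Hu'.
- move=> z t c M _ s _; apply/sat_imp => Ht; rewrite sat_iff /=; split.
  + by move=> H u Hu Hus; rewrite H.
  + by move=> H u Hu Hus; rewrite H.
- move=> z T a HT M _ s _; apply/sat_imp => -[HK Ha] u Hu Hus.
  have E : bsat u a <-> bsat s a.
    apply: bsat_agree => t Ht.
    have HK' : sat s (bigAnd [seq FKt arity z t | t <- T]) := HK.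
    move: HK'; rewrite sat_bigAnd => {}HK.
    have := HK (FKt arity z t); apply => //; apply/In_map; exists t; split => //; exact: HT.
  by apply/E; apply/sat_emb.
Qed.

End Sound.

Ltac solve_val :=
  let v := fresh "v" in intros v; simpl;
  repeat (match goal with
          | |- context [peval v ?p] => case: (peval v p)
          | |- context [v ?x] => case: (v x)
          end); simpl; try done.

Section GW.
Context (Pred : Type) (arity : Pred -> nat) (Cons : finType) (k : nat).
Local Notation form := (Defs.form arity Cons).
Local Notation bform := (Defs.bform arity Cons).
Local Notation term := (Defs.term Cons).
Local Notation TOP := (@fTop Pred arity Cons).
Local Notation BOT := (@fBot Pred arity Cons).
Local Notation bTOP := (@bTop Pred arity Cons).
Local Notation tv := (@TVar Cons).
Local Notation tc := (@TCons Cons).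

Lemma prov_dia_top z : prov k (dia z bTOP).
Proof.
apply: (@PL _ _ _ k [:: TOP; fImp (FKa z (BNeg bTOP)) (emb (BNeg bTOP))]).
- by move=> p [<-|[<-|[]]]; [exact: prov_fTop | exact: Ax_T].
- solve_val.
Qed.

Lemma nec z (a : bform) : prov k (emb a) -> prov k (FKa z a).
Proof.
move=> Ha.
have H : prov k (fImp (kphi z [::] [:: bTOP]) (FKa z a)).
  apply: R_KAdd => //; apply: (@PL _ _ _ k [:: emb a]); first by move=> p [<-|[]].
  solve_val.
apply: (@PL _ _ _ k [:: fImp (kphi z [::] [:: bTOP]) (FKa z a); dia z bTOP]).
- by move=> p [<-|[<-|[]]]; [exact: H | exact: prov_dia_top].
- solve_val.
Qed.

Lemma prov_Dn_refl n (t : term) : prov k (emb (Dn arity n t t)).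
Proof.
elim: n => [|n IH] /=; first exact: Ax_A1.
apply: (@PL _ _ _ k [:: emb (Dn arity n t t)]); first by move=> p [<-|[]].
solve_val.
Qed.

Lemma prov_Kvar z : prov k (FKt arity z (tv z)).
Proof.
apply: (@PL _ _ _ k [:: emb (Dn arity k (tv z) (tv z)); fImp (emb (Dn arity k (tv z) (tv z))) (FKt arity z (tv z))]).
- by move=> p [<-|[<-|[]]]; [exact: prov_Dn_refl | exact: Ax_ksight].
- solve_val.
Qed.

Lemma prov_Kcons z c : prov k (FKt arity z (tc c)).
Proof.
apply: (@PL _ _ _ k [:: FEq arity (tc c) (tc c); FKa z (BEq arity (tc c) (tc c));
   fImp (FEq arity (tc c) (tc c)) (fIff (FKt arity z (tc c)) (FKa z (BEq arity (tc c) (tc c))))]).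
- move=> p [<-|[<-|[<-|[]]]]; [exact: Ax_A1 | | exact: Ax_DeRe].
  by apply: nec; exact: Ax_A1.
- solve_val.
Qed.

Variables (G : form -> Prop) (Gcons : consistent k G)
  (Gmax : forall p, consistent k (fun q => G q \/ q = p) -> G p).

Lemma In_filter (T : Type) (P : pred T) (x : T) (l : seq T) :
  List.In x (filter P l) <-> List.In x l /\ P x.
Proof.
elim: l => [|a l IH] /=; first by split => // -[].
case Ha: (P a) => /=; rewrite IH.
  split; first by case=> [<-|[H1 H2]]; split; auto; rewrite Ha.
  by case=> [[<-|H1] H2]; auto.
split; first by case=> H1 H2; auto.
by case=> [[E|H1] H2]; [rewrite -E Ha in H2 | auto].
Qed.

Lemma gneg_l p : ~ G p ->
  exists l, (forall q, List.In q l -> G q) /\ prov k (fImp (bigAnd l) (FNeg p)).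
Proof.
move=> Hn; have : ~ consistent k (fun q => G q \/ q = p) by move/Gmax.
move=> /NNPP [l [Hl Hp]].
exists (filter (fun q => `[< G q >]) l); split.
- by move=> q /In_filter [_ /asboolP].
- apply: (@PL _ _ _ k [:: TOP; fImp (bigAnd l) BOT]).
    by move=> q [<-|[<-|[]]] //; exact: prov_fTop.
  move=> v /= /and3P [Ht HB _].
  rewrite peval_bigAnd // in HB.
  rewrite peval_bigAnd // negbK; apply/negP => /andP [Hf Hpv].
  have Hall : all (peval v) l.
    apply/(allIn (peval v) l) => q Hq.
    case: (Hl q Hq) => [Gq|->] //.
    apply: (proj1 (allIn _ _) Hf q); apply/In_filter; split => //; exact/asboolP.
  by rewrite Hall Ht in HB.
Qed.

Lemma gclosed (ps : seq form) p : (forall q, List.In q ps -> G q) -> prov k (imps ps p) -> G p.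
Proof.
move=> Hps Hi; apply: NNPP => /gneg_l [l [Hl Hp]]; apply: Gcons.
exists (ps ++ l); split; first by move=> q /In_cat [/Hps|/Hl].
apply: (@PL _ _ _ k [:: TOP; imps ps p; fImp (bigAnd l) (FNeg p)]).
  by move=> q [<-|[<-|[<-|[]]]] //; exact: prov_fTop.
move=> v /= /and4P [Ht Hi' Hl' _]; rewrite !peval_bigAnd // all_cat in Hl' *.
rewrite peval_imps in Hi'; move: Hi' Hl'; rewrite Ht.
by case: (all _ ps); case: (all _ l); case: (peval v p).
Qed.

Lemma gprov p : prov k p -> G p.
Proof. by move=> H; apply: (@gclosed [::]). Qed.

Lemma gPL (ps : seq form) p : (forall q, List.In q ps -> G q) ->
  (forall v, peval v TOP -> all (peval v) ps -> peval v p) -> G p.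
Proof.
move=> Hps Hv; apply: (gclosed Hps).
apply: (@PL _ _ _ k [:: TOP]); first by move=> q [<-|[]]; exact: prov_fTop.
move=> v /= /andP [Ht _]; rewrite peval_imps; apply/implyP; exact: Hv.
Qed.

Lemma gnot p : G (FNeg p) <-> ~ G p.
Proof.
split.
- move=> Hn Hp; apply: Gcons; exists [:: p; FNeg p]; split; first by move=> q [<-|[<-|[]]].
  apply: Ax_Tau; solve_val.
- move=> /gneg_l [l [Hl Hp]]; apply: (@gclosed l) => //.
  apply: (@PL _ _ _ k [:: TOP; fImp (bigAnd l) (FNeg p)]).
    by move=> q [<-|[<-|[]]] //; exact: prov_fTop.
  move=> v /= /and3P [Ht H _]; rewrite peval_imps; rewrite peval_bigAnd // in H.
  by rewrite /=; move: H; case: (all _ l); case: (peval v p).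
Qed.

Lemma gand p q : G (FAnd p q) <-> G p /\ G q.
Proof.
split.
- by move=> H; split; apply: (@gPL [:: FAnd p q]) => //; [move=> r [<-|[]] | solve_val | move=> r [<-|[]] | solve_val].
- by case=> H1 H2; apply: (@gPL [:: p; q]); [move=> r [<-|[<-|[]]] | solve_val].
Qed.

Lemma gimp p q : G (fImp p q) -> G p -> G q.
Proof. by move=> H1 H2; apply: (@gPL [:: fImp p q; p]); [move=> r [<-|[<-|[]]] | solve_val]. Qed.

Lemma giff p q : G (fIff p q) -> (G p <-> G q).
Proof.
move=> H; split => H'.
- by apply: (@gPL [:: fIff p q; p]); [move=> r [<-|[<-|[]]] | solve_val].
- by apply: (@gPL [:: fIff p q; q]); [move=> r [<-|[<-|[]]] | solve_val].
Qed.

Lemma gbigAnd l : G (bigAnd l) <-> forall p, List.In p l -> G p.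
Proof.
elim: l => [|p l IH] /=; first by split => // _; apply: gprov; exact: prov_fTop.
case: l IH => [|q l] IH; first by split; [move=> H r [<-|[]] | apply; left].
rewrite gand IH; split.
- by case=> Hp Hl r [<-|Hr] //; apply: Hl.
- by move=> H; split; [apply: H; left | move=> r Hr; apply: H; right].
Qed.

Lemma gbigOrF l : G (bigOrF l) -> exists p, List.In p l /\ G p.
Proof.
elim: l => [|p l IH] /=.
  by move=> H; exfalso; move/gnot: H; apply; apply: gprov; exact: prov_fTop.
case: l IH => [|q l] IH; first by move=> H; exists p; auto.
move=> H; case: (Classical_Prop.classic (G p)) => Hp; first by exists p; auto.
have /IH [r [Hr Gr]] : G (bigOrF (q :: l)).
  apply: (@gPL [:: FNeg (FAnd (FNeg p) (FNeg (bigOrF (q :: l)))); FNeg p]).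
    by move=> r [<-|[<-|[]]] //; apply/gnot.
  move=> v _ /=; case: (peval v p); case: (peval v (bigOrF (q :: l))) => //.
by exists r; auto.
Qed.

End GW.

Section Canon.
Context (Pred : Type) (arity : Pred -> nat) (Cons : finType) (k : nat).
Local Notation form := (Defs.form arity Cons).
Local Notation bform := (Defs.bform arity Cons).
Local Notation term := (Defs.term Cons).
Local Notation TOP := (@fTop Pred arity Cons).
Local Notation BOT := (@fBot Pred arity Cons).
Local Notation tv := (@TVar Cons).
Local Notation tc := (@TCons Cons).

Lemma key_deriv z c c' :
  let z' := other z in
  let d' := bsubst (tc c) (tv z') (Dn arity k (tv z) (tv z')) in
  prov k (fImp (kphi z [:: d'; BNeg (BEq arity (tc c) (tc c'))] [:: BEq arity (tv z') (tc c')])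
               (FKa z (BNeg (BEq arity (tv z') (tc c))))).
Proof.
move=> z' d'; apply: R_KAdd => //.
set dl := Dn arity k (tv z) (tv z').
set e1 := BEq arity (tv z') (tc c).
set e2 := BEq arity (tv z') (tc c').
set e3 := BEq arity (tc c) (tc c').
have Hn : prov k (FKa z (bImp (BNeg e3) (bImp e1 (BNeg e2)))).
  apply: nec; apply: (@PL _ _ _ k [:: fImp (emb e1) (FEq arity (tc c) (tv z'));
     fImp (FAnd (FEq arity (tc c) (tv z')) (emb e2)) (emb e3)]).
  - by move=> p [<-|[<-|[]]]; [exact: Ax_A2 | exact: Ax_A3].
  - solve_val.
apply: (@PL _ _ _ k [:: TOP;
   fImp (FKa z d') (emb d');
   fImp (emb e1) (FEq arity (tc c) (tv z'));
   fImp (FEq arity (tc c) (tv z')) (fIff (emb dl) (emb d'));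
   fImp (emb dl) (FKt arity z (tv z'));
   fImp (emb e1) (fIff (FKt arity z (tv z')) (FKa z e1));
   fImp (FKa z (bImp e1 (BNeg e2))) (fImp (FKa z e1) (FKa z (BNeg e2)));
   fImp (FKa z (bImp (BNeg e3) (bImp e1 (BNeg e2)))) (fImp (FKa z (BNeg e3)) (FKa z (bImp e1 (BNeg e2))));
   FKa z (bImp (BNeg e3) (bImp e1 (BNeg e2)))]).
- move=> p [<-|[<-|[<-|[<-|[<-|[<-|[<-|[<-|[<-|[]]]]]]]]]].
  + exact: prov_fTop.
  + exact: Ax_T.
  + exact: Ax_A2.
  + exact: Ax_A4.
  + exact: Ax_ksight.
  + exact: Ax_DeRe.
  + exact: Ax_K.
  + exact: Ax_K.
  + exact: Hn.
- solve_val.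
Qed.


Variables (G : form -> Prop) (Gcons : consistent k G)
  (Gmax : forall p, consistent k (fun q => G q \/ q = p) -> G p).

Local Notation gprov := (gprov Gcons Gmax).
Local Notation gPL := (gPL Gcons Gmax).
Local Notation gnot := (gnot Gcons Gmax).
Local Notation gand := (gand Gcons Gmax).
Local Notation gimp := (gimp Gcons Gmax).
Local Notation giff := (giff Gcons Gmax).
Local Notation gbigAnd := (gbigAnd Gcons Gmax).
Local Notation gbigOrF := (gbigOrF Gcons Gmax).

Lemma Gsym (t1 t2 : term) : G (FEq arity t1 t2) -> G (FEq arity t2 t1).
Proof. by move=> H; apply: (gimp _ H); apply: gprov; exact: Ax_A2. Qed.

Lemma Gtrans (t1 t2 t3 : term) : G (FEq arity t1 t2) -> G (FEq arity t2 t3) -> G (FEq arity t1 t3).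
Proof. by move=> H1 H2; apply: (gimp (p := FAnd (FEq arity t1 t2) (FEq arity t2 t3))); [apply: gprov; exact: Ax_A3 | apply/gand]. Qed.

Lemma Grefl (t : term) : G (FEq arity t t).
Proof. by apply: gprov; exact: Ax_A1. Qed.

Definition eqc (c d : Cons) : bool := `[< G (FEq arity (tc c) (tc d)) >].
Lemma eqc_refl c : eqc c c.
Proof. by apply/asboolP; exact: Grefl. Qed.

Definition rep (c : Cons) : Cons := xchoose (ex_intro (fun d => eqc c d) c (eqc_refl c)).

Lemma rep_spec c : G (FEq arity (tc c) (tc (rep c))).
Proof. exact/asboolP/(xchooseP (ex_intro (fun d => eqc c d) c (eqc_refl c))). Qed.

Lemma rep_eq c d : G (FEq arity (tc c) (tc d)) -> rep c = rep d.
Proof.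
move=> H; apply: eq_xchoose => e; apply/asboolP/asboolP => He.
- exact: Gtrans (Gsym H) He.
- exact: Gtrans H He.
Qed.

Lemma rep_idem c : rep (rep c) = rep c.
Proof. exact/rep_eq/Gsym/rep_spec. Qed.

Lemma rep_eqG c d : rep c = rep d -> G (FEq arity (tc c) (tc d)).
Proof. by move=> E; apply: Gtrans (rep_spec c) _; rewrite E; apply: Gsym; exact: rep_spec. Qed.

Definition repT (t : term) : term := match t with TCons c => tc (rep c) | TVar v => tv v end.

Lemma subst_eq (t1 t2 : term) (a : bform) : G (FEq arity t1 t2) ->
  (G (emb a) <-> G (emb (bsubst t1 t2 a))).
Proof. by move=> H; apply: giff; apply: (gimp _ H); apply: gprov; exact: Ax_A4. Qed.

Definition gL (L : seq Cons) (t : term) : term :=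
  match t with TCons c => if c \in L then tc (rep c) else t | _ => t end.

Lemma norm (a : bform) : G (emb a) <-> G (emb (map_terms repT a)).
Proof.
have H : forall L, G (emb a) <-> G (emb (map_terms (gL L) a)).
  elim=> [|c L IH].
    by rewrite (@map_terms_ext _ _ _ _ id) ?map_terms_id // => -[].
  rewrite IH (subst_eq _ (Gsym (rep_spec c))) bsubstE map_terms_comp.
  suff -> : map_terms (fun t => tsubst (tc (rep c)) (tc c) (gL L t)) a = map_terms (gL (c :: L)) a by [].
  apply: map_terms_ext => -[d|v] /=; last by case: v.
  rewrite in_cons; case: (boolP (d \in L)) => HdL /=; rewrite ?orbT ?orbF.
  - rewrite /tsubst /=; case: (rep d =P c) => // <-; by rewrite rep_idem.
  - by rewrite /tsubst /=; case: (d =P c) => [->|Hne].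
rewrite (H (enum Cons)); suff -> : map_terms (gL (enum Cons)) a = map_terms repT a by [].
by apply: map_terms_ext => -[d|v] //=; rewrite mem_enum.
Qed.

Definition D : finType := {c : Cons | rep c == c}.
Lemma rep_val (d : D) : rep (val d) = val d.
Proof. exact: eqP (valP d). Qed.
Definition ic (c : Cons) : D := @exist _ (fun c => rep c == c) (rep c) (introT eqP (rep_idem c)).
Lemma ic_onto (d : D) : exists c, ic c = d.
Proof. by exists (val d); apply: val_inj; rewrite /= rep_val. Qed.
Lemma ic_eq c d : ic c = ic d <-> G (FEq arity (tc c) (tc d)).
Proof.
split => [E|H]; first by apply: rep_eqG; exact: (congr1 val E).
by apply: val_inj; rewrite /=; apply: rep_eq.
Qed.

Definition interpC (P : Pred) (ds : (arity P).-tuple D) : Prop :=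
  G (@FP Pred arity Cons P (map_tuple (fun d : D => tc (val d)) ds)).
Definition relC (d e : D) : Prop := G (FR arity (tc (val d)) (tc (val e))).

Lemma serialC (d : D) : exists e, relC d e.
Proof.
have /gbigOrF [p [/In_map [t [_ ->]] Hp]] := gprov (Ax_Seriality arity k (val d)).
exists (ic t); rewrite /relC /=.
have := proj1 (norm (BR arity (tc (val d)) (tc t))) Hp.
by rewrite /= rep_val.
Qed.

Lemma exV z : exists c, `[< G (FEq arity (tv z) (tc c)) >].
Proof.
have /gbigOrF [p [/In_map [c [_ ->]] Hp]] := gprov (Ax_AtSomeWhere arity Cons k z).
by exists c; apply/asboolP.
Qed.
Definition vals z : Cons := xchoose (exV z).
Lemma vals_spec z : G (FEq arity (tv z) (tc (vals z))).
Proof. exact/asboolP/(xchooseP (exV z)). Qed.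

Definition T (z : var) : {set Cons} :=
  [set c | `[< G (dia z (BEq arity (tv (other z)) (tc c))) >]].

Lemma inT z c : (c \in T z) <-> G (dia z (BEq arity (tv (other z)) (tc c))).
Proof. by rewrite inE; split => /asboolP. Qed.

Lemma vals_in_T z : vals (other z) \in T z.
Proof.
apply/inT; apply: (gPL (ps := [:: FEq arity (tv (other z)) (tc (vals (other z)));
  fImp (FKa z (BNeg (BEq arity (tv (other z)) (tc (vals (other z))))))
       (emb (BNeg (BEq arity (tv (other z)) (tc (vals (other z))))))])).
- by move=> q [<-|[<-|[]]]; [exact: vals_spec | apply: gprov; exact: Ax_T].
- solve_val.
Qed.

Definition stf (f : var -> Cons) : D * D := (ic (f vx), ic (f vy)).
Definition fz (z : var) (c : Cons) : var -> Cons := fun v =>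
  match z, v with vx, vx => vals vx | vy, vy => vals vy | _, _ => c end.
Definition svalD (s : D * D) (v : var) : D := match v with vx => s.1 | vy => s.2 end.
Definition s0 : D * D := stf vals.

Definition sitsC (s : D * D) : Prop := exists z c, c \in T z /\ s = stf (fz z c).
Definition simC (z : var) (s s' : D * D) : Prop := svalD s z = svalD s' z.

Lemma sitsC_ne : exists s, sitsC s.
Proof. by exists s0, vx, (vals vy); split => //; exact: (vals_in_T vx). Qed.
Lemma simC_refl z s : sitsC s -> simC z s s. Proof. by []. Qed.
Lemma simC_sym z s s' : sitsC s -> sitsC s' -> simC z s s' -> simC z s' s.
Proof. by move=> _ _; rewrite /simC => ->. Qed.
Lemma simC_trans z s1 s2 s3 : sitsC s1 -> sitsC s2 -> sitsC s3 ->
  simC z s1 s2 -> simC z s2 s3 -> simC z s1 s3.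
Proof. by move=> _ _ _; rewrite /simC => -> ->. Qed.

Definition CM : model arity Cons :=
  @Model Pred arity Cons D interpC relC serialC ic ic_onto sitsC sitsC_ne simC
    simC_refl simC_sym simC_trans.

Lemma bsat_ground (s : D * D) (a : bform) :
  (forall t, List.In t (bterms a) -> exists c, t = tc c) ->
  (bsat (M := CM) s a <-> G (emb (map_terms repT a))).
Proof.
elim: a => /=.
- move=> P ts H; rewrite /interpC.
  suff -> : map_tuple (fun d : D => tc (val d)) (map_tuple (teval (M := CM) s) ts) = map_tuple repT ts by [].
  apply: val_inj => /=; rewrite -map_comp; apply: map_In_ext => t /H [c ->] //.
- move=> t1 t2 H; have [c1 ->] := H t1 (or_introl erefl).
  by have [c2 ->] := H t2 (or_intror (or_introl erefl)).
- move=> t1 t2 H; have [c1 ->] := H t1 (or_introl erefl).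
  have [c2 ->] := H t2 (or_intror (or_introl erefl)) => /=.
  rewrite ic_eq; split => [Hc|Hc]; first by rewrite (rep_eq Hc); exact: Grefl.
  by apply: rep_eqG; rewrite -rep_idem -[in RHS]rep_idem; apply: rep_eq.
- by move=> a IH H; rewrite gnot IH.
- move=> a IHa b IHb H; rewrite gand IHa ?IHb // => t Ht; apply: H; apply/In_cat; auto.
Qed.

Definition gsub (f : var -> Cons) (a : bform) : bform :=
  map_terms (fun t => match t with TVar v => tc (f v) | t => t end) a.

Lemma truth_bool (f : var -> Cons) (a : bform) :
  bsat (M := CM) (stf f) a <-> G (emb (gsub f a)).
Proof.
rewrite norm -bsat_ground.
- by rewrite /gsub; symmetry; apply: bsat_map => -[c|[]].
- by move=> t /bterms_map [u [_ ->]]; case: u => [c|v]; eauto.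
Qed.

Lemma truth_s0 (a : bform) : bsat (M := CM) s0 a <-> G (emb a).
Proof.
rewrite truth_bool (subst_eq a (Gsym (vals_spec vx))).
rewrite (subst_eq (bsubst (tc (vals vx)) (tv vx) a) (Gsym (vals_spec vy))).
rewrite !bsubstE map_terms_comp; suff -> : gsub vals a = map_terms
  (fun t => tsubst (tc (vals vy)) (tv vy) (tsubst (tc (vals vx)) (tv vx) t)) a by [].
by apply: map_terms_ext => -[c|[]].
Qed.

Lemma truth_fz z c (a : bform) :
  bsat (M := CM) (stf (fz z c)) a <-> G (emb (bsubst (tc c) (tv (other z)) a)).
Proof.
rewrite truth_bool (subst_eq (bsubst (tc c) (tv (other z)) a) (Gsym (vals_spec z))).
rewrite !bsubstE map_terms_comp; suff -> : gsub (fz z c) a = map_terms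
  (fun t => tsubst (tc (vals z)) (tv z) (tsubst (tc c) (tv (other z)) t)) a by [].
by apply: map_terms_ext => -[d|v] //=; case: z; case: v.
Qed.

Lemma Kzeq_in z : G (Kzeq arity z (other z) (T z)).
Proof.
apply/gbigAnd => p /In_cat [] /In_map [c [/In_mem Hc ->]].
- by rewrite mem_enum in Hc; apply/inT.
- rewrite mem_enum in_setC in Hc.
  apply: NNPP => H; move/negP: Hc; apply; apply/inT; exact/gnot.
Qed.

Lemma KG z (a : bform) : G (FKa z a) <->
  forall c, c \in T z -> G (emb (bsubst (tc c) (tv (other z)) a)).
Proof.
have HH := giff (gimp (gprov (Ax_KGround k z (T z) a)) (Kzeq_in z)).
rewrite HH.
rewrite gbigAnd; split.
- by move=> H c Hc; apply: H; apply/In_map; exists c; split => //; apply/In_mem; rewrite mem_enum.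
- by move=> H p /In_map [c [/In_mem Hc ->]]; apply: H; rewrite mem_enum in Hc.
Qed.

Lemma svalD_fz z c : svalD (stf (fz z c)) z = ic (vals z) /\ svalD (stf (fz z c)) (other z) = ic c.
Proof. by case: z. Qed.

Lemma sits_char z u : sitsC u -> svalD u z = ic (vals z) ->
  exists c, c \in T z /\ u = stf (fz z c).
Proof.
case=> w [c [Hc ->]]; case: w Hc; case: z => Hc /= E; try by exists c.
- exists (vals vx); split; first exact: (vals_in_T vy).
  by rewrite /stf /= E.
- exists (vals vy); split; first exact: (vals_in_T vx).
  by rewrite /stf /= E.
Qed.

Lemma sits_other z u : sitsC u -> svalD u z <> ic (vals z) ->
  svalD u (other z) = ic (vals (other z)).
Proof. by case=> w [c [Hc ->]]; case: w Hc; case: z. Qed.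

Lemma svalD_s0 z : svalD s0 z = ic (vals z).
Proof. by case: z. Qed.

Lemma truth_Ka z a : sat (M := CM) s0 (FKa z a) <-> G (FKa z a).
Proof.
rewrite KG /=; split.
- move=> H c Hc; apply/truth_fz; apply: H; first by exists z, c.
  by rewrite /simC (proj1 (svalD_fz z c)) svalD_s0.
- move=> H u Hu Hsim.
  have [c [Hc ->]] : exists c, c \in T z /\ u = stf (fz z c).
    by apply: sits_char => //; rewrite Hsim svalD_s0.
  exact/truth_fz/H.
Qed.

Lemma truth (p : form) : sat (M := CM) s0 p <-> G p.
Proof.
elim: p.
- by move=> P ts; exact: (truth_s0 (BP ts)).
- by move=> t1 t2; exact: (truth_s0 (BR arity t1 t2)).
- by move=> t1 t2; exact: (truth_s0 (BEq arity t1 t2)).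
- move=> z t.
  have [e He] : exists e, G (FEq arity t (tc e)).
    by case: t => [c|v]; [exists c; exact: Grefl | exists (vals v); exact: vals_spec].
  have HH := giff (gimp (gprov (Ax_DeRe arity k z t e)) He).
  rewrite HH -truth_Ka /=.
  have E : teval (M := CM) s0 t = ic e by apply/(truth_s0 (BEq arity t (tc e))).
  by rewrite E.
- by move=> p IH; rewrite gnot -IH.
- by move=> p IHp q IHq; rewrite gand -IHp -IHq.
- exact: truth_Ka.
Qed.

Lemma dd_other z c : DD (M := CM) k (ic (vals z)) (ic c) ->
  G (emb (bsubst (tc c) (tv (other z)) (Dn arity k (tv z) (tv (other z))))).
Proof.
move=> H; apply/truth_fz; apply/bsat_Dn.
by case: z H.
Qed.

Lemma key_model z c c' : c \in T z -> c' \in T z ->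
  DD (M := CM) k (ic (vals z)) (ic c) -> ic c = ic c'.
Proof.
move=> Hc Hc' /dd_other Hd; apply/ic_eq; apply: NNPP => Hn.
set d' := bsubst (tc c) (tv (other z)) (Dn arity k (tv z) (tv (other z))).
have Kd : G (FKa z d').
  apply/KG => c'' _; rewrite /d' !bsubstE map_terms_comp.
  suff -> : map_terms (fun t => tsubst (tc c'') (tv (other z)) (tsubst (tc c) (tv (other z)) t))
     (Dn arity k (tv z) (tv (other z))) = map_terms (tsubst (tc c) (tv (other z))) (Dn arity k (tv z) (tv (other z))).
    by rewrite -bsubstE.
  by apply: map_terms_ext => -[d|v] //=; case: z {Hc Hc' Hd d'}; case: v.
have Kn : G (FKa z (BNeg (BEq arity (tc c) (tc c')))).
  by apply/KG => c'' _ /=; apply/gnot.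
have Dc' : G (dia z (BEq arity (tv (other z)) (tc c'))) by apply/inT.
have Dc : G (dia z (BEq arity (tv (other z)) (tc c))) by apply/inT.
have := gimp (gprov (key_deriv z c c')).
move/(_ _) => H.
have Hk : G (FKa z (BNeg (BEq arity (tv (other z)) (tc c)))).
  apply: H; apply/gbigAnd => p /=; rewrite /d' in Kd.
  by case=> [<-|[<-|[<-|[]]]].
by move/gnot: Dc; apply.
Qed.

Lemma ksightC : ksight CM k.
Proof.
move=> z s s' Hs Hs' Hsim z'.
have Hss : svalD s z = svalD s' z := Hsim.
change (DD (M := CM) k (svalD s z) (svalD s z') -> svalD s z' = svalD s' z').
have Evar : forall a b : var, b = a \/ b = other a by case; case; auto.
have [-> //|Hz'] := Evar z z'.
case: (Classical_Prop.classic (svalD s z = ic (vals z))) => Hv.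
- have [c [Hc Es]] := sits_char Hs Hv.
  have [c' [Hc' Es']] := sits_char Hs' (etrans (esym Hss) Hv).
  rewrite Hz' Es Es' !(proj2 (svalD_fz z _)) (proj1 (svalD_fz z _)).
  exact: key_model.
- by move=> _; rewrite Hz' !sits_other // -Hss.
Qed.

Lemma canonical_sat : ksight CM k /\ sitsC s0 /\ forall p, G p -> sat (M := CM) s0 p.
Proof.
split; first exact: ksightC.
split; first by exists vx, (vals vy); split => //; exact: (vals_in_T vx).
by move=> p /truth.
Qed.

End Canon.

From mathcomp Require Import classical_sets.

Section Lind.
Context (Pred : Type) (arity : Pred -> nat) (Cons : finType) (k : nat).
Local Notation form := (Defs.form arity Cons).

Lemma consistent_sub (S S' : form -> Prop) :
  (forall p, S p -> S' p) -> consistent k S' -> consistent k S.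
Proof. by move=> H HS' [l [Hl Hp]]; apply: HS'; exists l; split => // p /Hl /H. Qed.

Lemma lindenbaum (G : form -> Prop) : consistent k G ->
  exists Gm : form -> Prop, (forall p, G p -> Gm p) /\ consistent k Gm /\
    (forall p, consistent k (fun q => Gm q \/ q = p) -> Gm p).
Proof.
move=> HG.
pose P := fun A : set form => consistent k (fun q => A q \/ G q).
have HZ : forall F : set (set form), (F `<=` P)%classic -> total_on F subset ->
    P (\bigcup_(X in F) X)%classic.
  move=> F FP Ftot [l [Hl Hp]].
  have : (forall q, List.In q l -> G q) \/
         exists2 X, F X & forall q, List.In q l -> X q \/ G q.
    elim: l Hl {Hp} => [|p l IH] Hl; first by left.
    have /IH : forall q, List.In q l -> (\bigcup_(X in F) X)%classic q \/ G q.
      by move=> q Hq; apply: Hl; right.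
    have := Hl p (or_introl erefl) => -[[Y FY Yp]|Gp].
    + case=> [HlG|[X FX HX]].
      * right; exists Y => // q [<-|Hq]; [by left | by right; apply: HlG].
      * right; case: (Ftot X Y FX FY) => [XY|YX].
        - by exists Y => // q [<-|/HX [/XY|]]; auto.
        - by exists X => // q [<-|/HX]; auto.
    + case=> [HlG|[X FX HX]].
      * by left => q [<-|/HlG].
      * by right; exists X => // q [<-|/HX]; auto.
  case=> [HlG|[X FX HX]].
  - by apply: HG; exists l.
  - by apply: (FP X FX); exists l.
have [A [PA Amax]] := Zorn_bigcup HZ.
exists (fun q => A q \/ G q); split; first by auto.
split => // p Hc; apply: NNPP => Hn.
apply: (Amax (fun q => A q \/ q = p)).
- split; first by move=> q; auto.
  by move=> /(_ p (or_intror erefl)) Ap; apply: Hn; left.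
- apply: consistent_sub Hc => q [[|->]|]; auto.
Qed.
End Lind.


Theorem theorem2 (Pred : Type) (arity : Pred -> nat) (Cons : finType)
    (HCons : 0 < #|Cons|) (k : nat) :
  (forall G : form arity Cons -> Prop, consistent k G -> satisfiable k G) /\
  (forall G : form arity Cons -> Prop,
     (forall l : seq (form arity Cons),
        (forall p, List.In p l -> G p) ->
        satisfiable k (fun p => List.In p l)) ->
     satisfiable k G).
Proof.
have compl : forall G : form arity Cons -> Prop, consistent k G -> satisfiable k G.
  move=> G HG; have [Gm [HGm [Gc Gx]]] := lindenbaum HG.
  have [Hk [Hs Hsat]] := canonical_sat Gc Gx.
  exists (CM Gc Gx); split => //; exists (s0 Gc Gx); split => // p /HGm; exact: Hsat.
split => // G HG; apply: compl => -[l [Hl Hp]].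
have [M [HM [s [Hs Hsat]]]] := HG l Hl.
have := sound Hp HM Hs; rewrite sat_imp sat_bigAnd => H.
by apply: (sat_BOT (s := s)); apply: H.
Qed.
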